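(* Assume the growth hypotheses described in the context, and in addition that $\int|x|^p\mu(dx)<\infty$ and that $c_1,c_2,a_+,a_-$ have growth of order at most $p$ (i.e. $|c_1(x)|+a_+(x)+a_-(x)\le M(1+|x|^p)$ and $|c_2(y)|\le M(1+|y|^p)$ for some $M$). Then there is a constant $K$ such that for every $f\in L^1(\mu)$ for which $f^c,f^{cc}$ are well defined and $f^c\in L^1(\nu)$, $$|f^{cc}(x)|\le\mu(f^-)+\nu((f^c)^-)+K(1+|x|^p),\qquad x\in\mathsf{X},$$ with $K$ independent of $f$. If $c$ is replaced by $c/\varepsilon$ with $\varepsilon\in(0,1)$ (and $c_1,c_2,\hat c,a_\pm,K^i_\pm$ correspondingly divided by $\varepsilon$), the corresponding bound holds with constant $\tilde K:=\varepsilon^{-\max\{p/\alpha,1\}}K$, where $\alpha:=\min_i\tilde\alpha_i=p-\max_i\beta_i$.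
   Context: $(\mathsf{X},d_{\mathsf{X}})$, $(\mathsf{Y},d_{\mathsf{Y}})$ are Polish metric spaces with reference points $x_0,y_0$; $|x|:=d_{\mathsf{X}}(x,x_0)$, $|y|:=d_{\mathsf{Y}}(y,y_0)$. $\mu\in\mathcal{P}(\mathsf{X})$, $\nu\in\mathcal{P}(\mathsf{Y})$, $c:\mathsf{X}\times\mathsf{Y}\to\mathbb{R}$ measurable; $\mu(h):=\int h\,d\mu$, $h^-=\max(-h,0)$. Conjugates: for measurable $f:\mathsf{X}\to[-\infty,\infty]$, $f^c(y):=-\log\int e^{f(x)-c(x,y)}\mu(dx)$ and $f^{cc}(x):=-\log\int e^{f^c(y)-c(x,y)}\nu(dy)$ (when the integrals are well defined). Growth hypotheses: fix $p>0$ with $\int e^{\lambda|y|^p}\nu(dy)<\infty$ for some $\lambda>0$; fix $N\ge0$ and $\alpha_i\in[0,p]$, $\beta_i\in[0,p)$ with $\alpha_i+\beta_i\le p$ ($1\le i\le N$), and set $\tilde\alpha_i:=p-\beta_i$. The cost has the form $c(x,y)=c_1(x)+c_2(y)+\hat c(x,y)$ with $c_1\in L^1(\mu)$, $c_2\in L^1(\nu)$ and $-a_-(x)-\sum_{i=1}^NK_-^i|x|^{\alpha_i}|y|^{\beta_i}\le\hat c(x,y)\le a_+(x)+\sum_{i=1}^NK_+^i|x|^{\alpha_i}|y|^{\beta_i}$, where $K_\pm^i\ge0$ and $a_\pm\ge0$ are measurable with $A_+:=\int a_+d\mu<\infty$. *)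

(* Defs.v *)
From HB Require Import structures.
From mathcomp Require Import all_boot all_order all_algebra.
From mathcomp Require Import all_classical all_reals all_analysis.
Set Implicit Arguments. Unset Strict Implicit. Unset Printing Implicit Defensive.
Import Order.TTheory GRing.Theory Num.Theory.
Local Open Scope classical_set_scope.
Local Open Scope ring_scope.

Section MetricDefs.
Context {R : realType} {T : Type}.
Variable dist : T -> T -> R.

Definition is_metric : Prop :=
  [/\ (forall x y, 0 <= dist x y),
      (forall x y, dist x y = 0 <-> x = y),
      (forall x y, dist x y = dist y x) &
      (forall x y z, dist x z <= dist x y + dist y z)].

Definition metric_open (A : set T) : Prop :=
  forall x, A x -> exists2 r : R, 0 < r & forall y, dist x y < r -> A y.

Definition metric_complete : Prop :=
  forall u : nat -> T,
    (forall e : R, 0 < e -> exists N, forall m n, (N <= m)%N -> (N <= n)%N ->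
        dist (u m) (u n) < e) ->
    exists l, forall e : R, 0 < e -> exists N, forall n, (N <= n)%N ->
        dist (u n) l < e.

Definition metric_separable : Prop :=
  exists u : nat -> T, forall x (e : R), 0 < e -> exists n, dist x (u n) < e.
End MetricDefs.

Definition polish_metric_space {R : realType} {d} (T : measurableType d)
    (dist : T -> T -> R) : Prop :=
  [/\ is_metric dist, metric_complete dist, metric_separable dist &
      (@measurable d T) = <<s metric_open dist >>].

Local Open Scope ereal_scope.

Definition cconj {R : realType} {d1 d2} {X : measurableType d1}
    {Y : measurableType d2} (mu : {measure set X -> \bar R})
    (c : X * Y -> R) (f : X -> R) : Y -> \bar R :=
  fun y => - lne (\int[mu]_x (expR (f x - c (x, y)))%:E).

Definition cconj2 {R : realType} {d1 d2} {X : measurableType d1}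
    {Y : measurableType d2} (nu : {measure set Y -> \bar R})
    (c : X * Y -> R) (g : Y -> \bar R) : X -> \bar R :=
  fun x => - lne (\int[nu]_y expeR (g y - (c (x, y))%:E)).

Definition negpart {R : realType} (r : \bar R) : \bar R := maxe (- r) 0.

(* Main.v *)
Require Import Defs.
From HB Require Import structures.
From mathcomp Require Import all_boot all_order all_algebra.
From mathcomp Require Import all_classical all_reals all_analysis.
From mathcomp Require Import measurable_realfun.
From mathcomp Require Import ring lra.
Import Order.TTheory GRing.Theory Num.Theory.
Import numFieldNormedType.Exports.
Local Open Scope classical_set_scope.
Local Open Scope ring_scope.

Lemma measurable_dist (R : realType) d (T : measurableType d) (dist : T -> T -> R) (z : T) :
  polish_metric_space dist -> measurable_fun setT (fun x => dist x z).
Proof.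
case=> [[d0 dE dC dT] _ _ mE].
apply: (measurability (@measurable_realfun.RGenInftyO.G R)).
  exact: measurable_realfun.RGenInftyO.measurableE.
move=> A [B [r ->] <-]; rewrite setTI mE.
apply: sub_sigma_algebra => x /= hx.
exists (r - dist x z); first by rewrite subr_gt0.
move=> y hy /=; rewrite in_itv /=.
have := dT y x z; rewrite (dC y x) => h.
apply: (le_lt_trans h); by rewrite -ltrBrDr.
Qed.
Arguments measurable_dist {R d T dist} z _.

Section Jensen.
Context {R : realType} {d} {T : measurableType d} {P : probability T R}.
Local Open Scope ereal_scope.

Lemma int_fin (g : T -> R) : P.-integrable setT (EFin \o g) ->
  \int[P]_x (g x)%:E = (Rintegral P setT g)%:E.
Proof. by move=> ig; rewrite /Rintegral fineK //; exact: integrable_fin_num. Qed.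

Lemma PsetT : (P : {measure set T -> \bar R}) setT = 1.
Proof. exact: probability_setT. Qed.

Lemma int_cst (r : R) : P.-integrable setT (EFin \o (fun _ : T => r)).
Proof.
apply/integrableP; split; first exact: measurable_cst.
rewrite integral_cst //= PsetT mule1; exact: ltry.
Qed.

Lemma Rint_cst (r : R) : Rintegral P setT (fun _ => r) = r.
Proof. by rewrite Rintegral_cst // PsetT /= mulr1. Qed.

Lemma iZ (k : R) (f : T -> R) : P.-integrable setT (EFin \o f) ->
  P.-integrable setT (EFin \o (fun x => k * f x)%R).
Proof.
move=> h; have := integrableZl measurableT k h.
by rewrite (_ : (fun x => k%:E * (EFin \o f) x) = EFin \o (fun x => k * f x)%R) //; apply/funext => x.
Qed.

Lemma iD (f g : T -> R) : P.-integrable setT (EFin \o f) -> P.-integrable setT (EFin \o g) ->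
  P.-integrable setT (EFin \o (fun x => f x + g x)%R).
Proof.
move=> hf hg; have := integrableD measurableT hf hg.
by rewrite (_ : (EFin \o f) \+ (EFin \o g) = EFin \o (fun x => f x + g x)%R) //; apply/funext => x.
Qed.

Lemma iB (f g : T -> R) : P.-integrable setT (EFin \o f) -> P.-integrable setT (EFin \o g) ->
  P.-integrable setT (EFin \o (fun x => f x - g x)%R).
Proof.
move=> hf hg; have := integrableB measurableT hf hg.
by rewrite (_ : (EFin \o f) \- (EFin \o g) = EFin \o (fun x => f x - g x)%R) //; apply/funext => x.
Qed.

Lemma jensen_exp (g : T -> R) : P.-integrable setT (EFin \o g) ->
  (expR (Rintegral P setT g))%:E <= \int[P]_x (expR (g x))%:E.
Proof.
move=> ig; set m := Rintegral P setT g.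
have mg : measurable_fun setT g by exact/measurable_EFinP/(measurable_int P).
have meg : measurable_fun setT (fun x => expR (g x)) by exact: measurableT_comp.
have [->|] := eqVneq (\int[P]_x (expR (g x))%:E) +oo; first exact: leey.
move=> hne.
have ieg : P.-integrable setT (EFin \o (fun x => expR (g x))).
  apply/integrableP; split; first exact/measurable_EFinP.
  rewrite (eq_integral (fun x => (expR (g x))%:E)); first by rewrite ltey.
  by move=> x _; rewrite /comp abse_EFin ger0_norm ?expR_ge0.
have ih : P.-integrable setT (EFin \o (fun x => expR m * (1 + (g x - m)))%R).
  apply: iZ; apply: iD; first exact: int_cst.
  by apply: iB => //; exact: int_cst.
rewrite int_fin // lee_fin.
have -> : (expR m = Rintegral P setT (fun x => expR m * (1 + (g x - m)))%R)%R.
  rewrite RintegralZl //; last first.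
    by apply: iD => //; [exact: int_cst|apply: iB => //; exact: int_cst].
  rewrite RintegralD //; last 2 first.
  - exact: int_cst.
  - by apply: iB => //; exact: int_cst.
  rewrite RintegralB //; last exact: int_cst.
  by rewrite !Rint_cst -/m subrr addr0 mulr1.
apply: le_Rintegral => // x _.
rewrite -[X in (_ <= expR X)%R](subrK m) expRD mulrC ler_wpM2r ?expR_ge0 //.
exact: expR_ge1Dx.
Qed.
Lemma negE (g : T -> R) : \int[P]_x ((EFin \o g)^\- x) = \int[P]_x negpart (g x)%:E.
Proof. by apply: eq_integral => x _; rewrite funenegE. Qed.

Lemma neg_fin (g : T -> R) : P.-integrable setT (EFin \o g) ->
  \int[P]_x negpart (g x)%:E \is a fin_num.
Proof.
move=> ig; have := integrable_fin_num measurableT (integrable_funeneg measurableT ig).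
by rewrite negE.
Qed.

Lemma pos_fin (g : T -> R) : P.-integrable setT (EFin \o g) ->
  \int[P]_x ((EFin \o g)^\+ x) \is a fin_num.
Proof.
by move=> ig; have := integrable_fin_num measurableT (integrable_funepos measurableT ig).
Qed.

Lemma neg_ge0 (g : T -> \bar R) : 0 <= \int[P]_x negpart (g x).
Proof. by apply: integral_ge0 => x _; rewrite /negpart le_max lexx orbT. Qed.

Lemma neg_bound (g : T -> R) : P.-integrable setT (EFin \o g) ->
  (- Rintegral P setT g)%:E <= \int[P]_x negpart (g x)%:E.
Proof.
move=> ig; rewrite EFinN -int_fin // integralE.
have fa := pos_fin g ig; have fb := neg_fin g ig.
have a0 : 0 <= \int[P]_x ((EFin \o g)^\+ x) by apply: integral_ge0 => x _; exact: funepos_ge0.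
rewrite negE.
move: fa fb a0; set a := \int[P]_x _; set b := \int[P]_x _.
move=> fa fb a0; rewrite -(fineK fa) -(fineK fb) -EFinB -EFinN lee_fin.
move: a0; rewrite -(fineK fa) lee_fin; lra.
Qed.
Lemma Rlin (k1 k2 : R) (a b h : T -> R) :
  P.-integrable setT (EFin \o a) -> P.-integrable setT (EFin \o b) -> P.-integrable setT (EFin \o h) ->
  Rintegral P setT (fun x => k1 + a x + b x + k2 * (1 + h x))%R =
  (k1 + Rintegral P setT a + Rintegral P setT b + k2 * (1 + Rintegral P setT h))%R.
Proof.
move=> ia ib ih.
have i1 : P.-integrable setT (EFin \o (fun x => k1 + a x)%R) by apply: iD => //; exact: int_cst.
have i2 : P.-integrable setT (EFin \o (fun x => k1 + a x + b x)%R) by apply: iD.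
have i3 : P.-integrable setT (EFin \o (fun x => 1 + h x)%R) by apply: iD => //; exact: int_cst.
rewrite (RintegralD (f1 := (fun x => k1 + a x + b x)%R) (f2 := (fun x => k2 * (1 + h x))%R)) //; last exact: iZ.
rewrite (RintegralD (f1 := (fun x => k1 + a x)%R) (f2 := b)) //.
rewrite (RintegralD (f1 := (fun x => k1)%R) (f2 := a)) //; last exact: int_cst.
rewrite (RintegralZl (f := (fun x => 1 + h x)%R)) //.
rewrite (RintegralD (f1 := (fun x => 1)%R) (f2 := h)) //; last exact: int_cst.
by rewrite !Rint_cst.
Qed.
End Jensen.

Lemma young_like (R : realType) (y w b p del : R) : 0 <= y -> 0 <= w -> 0 <= b < p -> 0 < del ->
  w * y `^ b <= del * y `^ p + w * (w / del) `^ (b / (p - b)).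
Proof.
move=> y0 w0 /andP[b0 bp] d0.
have pb : 0 < p - b by rewrite subr_gt0.
have e0 : 0 <= b / (p - b) by rewrite divr_ge0 // ltW.
case: (leP (w / del) (y `^ (p - b))) => h.
- apply: (@le_trans _ _ (del * y `^ p)); last by rewrite lerDl mulr_ge0 // powR_ge0.
  have : w <= del * y `^ (p - b) by rewrite -ler_pdivrMl // mulrC.
  move=> /(ler_wpM2r (powR_ge0 y b)) /le_trans; apply.
  rewrite -mulrA -powRD ?subrK //.
  by rewrite gt_eqF // (le_lt_trans b0 bp).
- apply: (@le_trans _ _ (w * (w / del) `^ (b / (p - b)))); last by rewrite lerDr mulr_ge0 // ?powR_ge0 // ltW.
  apply: ler_wpM2l => //.
  have -> : y `^ b = (y `^ (p - b)) `^ (b / (p - b)).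
    by rewrite -powRrM mulrC divfK // gt_eqF.
  apply: ge0_ler_powR => //; rewrite ?nnegrE ?powR_ge0 ?ltW //.
  exact: le_lt_trans (powR_ge0 _ _) h.
Qed.

Lemma powR_le1p (R : realType) (t a p : R) : 0 <= t -> 0 <= a <= p -> t `^ a <= 1 + t `^ p.
Proof.
move=> t0 /andP[a0 ap].
case: (leP t 1) => ht.
- apply: (@le_trans _ _ 1); last by rewrite lerDl powR_ge0.
  apply: (@le_trans _ _ (1 `^ a)); last by rewrite powR1.
  by apply: ge0_ler_powR => //; rewrite nnegrE.
- apply: (@le_trans _ _ (t `^ p)); last by rewrite lerDr.
  by apply: ler_powR => //; exact: ltW.
Qed.

Lemma powR_max1 (R : realType) (t r : R) : 0 <= t -> 0 <= r -> (Num.max 1 t) `^ r <= 1 + t `^ r.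
Proof.
move=> t0 r0; case: (leP t 1) => ht.
  by rewrite powR1 lerDl powR_ge0.
- by rewrite lerDr.
Qed.

Lemma young_chain (R : realType) (s t Kp Km m1 al be p del m : R) :
  1 <= s -> 0 <= t -> 0 <= Kp -> 0 <= Km -> 0 <= m1 -> 0 <= al -> 0 <= be < p ->
  al + be <= p -> 0 < del -> p / (p - be) <= m ->
  (s * (Kp * m1 + Km * t `^ al)) * ((s * (Kp * m1 + Km * t `^ al)) / del) `^ (be / (p - be))
   <= s `^ m * ((Kp * m1 + Km) * ((Kp * m1 + Km) / del) `^ (be / (p - be))) * (1 + t `^ p).
Proof.
move=> s1 t0 Kp0 Km0 m10 al0 /andP[be0 bep] albe d0 pm.
set w := s * (Kp * m1 + Km * t `^ al).
set L := Kp * m1 + Km.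
have s0 : 0 <= s by exact: le_trans s1.
have pb : 0 < p - be by rewrite subr_gt0.
set e := be / (p - be).
have e0 : 0 <= e by rewrite divr_ge0 // ltW.
set v := Num.max 1 t.
have v1 : 1 <= v by rewrite le_max lexx.
have v0 : 0 <= v by exact: le_trans v1.
have tv : t <= v by rewrite le_max lexx orbT.
have L0 : 0 <= L by rewrite addr_ge0 // mulr_ge0.
have va1 : 1 <= v `^ al by rewrite -(powRr0 v) ler_powR.
have h1 : w <= s * L * v `^ al.
  rewrite /w -mulrA; apply: ler_wpM2l => //; rewrite /L mulrDl; apply: lerD.
  - by rewrite -{1}(mulr1 (Kp * m1)); apply: ler_wpM2l => //; exact: mulr_ge0.
  - by apply: ler_wpM2l => //; apply: ge0_ler_powR => //; rewrite nnegrE.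
have w0 : 0 <= w by rewrite /w mulr_ge0 // addr_ge0 // mulr_ge0 // powR_ge0.
have h2 : (w / del) `^ e <= s `^ e * (L / del) `^ e * v `^ (al * e).
  apply: (@le_trans _ _ ((s * (L / del) * v `^ al) `^ e)).
    apply: ge0_ler_powR => //.
    - by rewrite nnegrE divr_ge0 // ltW.
    - by rewrite nnegrE !mulr_ge0 // ?powR_ge0 // invr_ge0 ltW.
    - apply: (@le_trans _ _ (s * L * v `^ al / del)).
        by apply: ler_wpM2r => //; rewrite invr_ge0 ltW.
      by rewrite le_eqVlt; apply/orP; left; apply/eqP; ring.
  have sL : 0 <= s * (L / del) by rewrite mulr_ge0 // divr_ge0 // ltW.
  rewrite (powRM _ sL (powR_ge0 _ _)) (powRM _ s0); last by rewrite divr_ge0 // ltW.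
  by rewrite powRrM.
have e1 : 1 + e = p / (p - be).
  by rewrite /e -{1}(divff (lt0r_neq0 pb)) -mulrDl subrK.
apply: (@le_trans _ _ ((s * L * v `^ al) * (s `^ e * (L / del) `^ e * v `^ (al * e)))).
  apply: ler_pM => //; rewrite ?powR_ge0 //.
have -> : s * L * v `^ al * (s `^ e * (L / del) `^ e * v `^ (al * e))
   = (s `^ (1 + e)) * (L * (L / del) `^ e) * (v `^ (al * (1 + e))).
  rewrite powRD ?powRr1 //.
  rewrite [al * (1 + e)]mulrDr mulr1 powRD; last by apply/implyP => _; rewrite gt_eqF // (lt_le_trans ltr01 v1).
  ring.
  by apply/implyP => _; rewrite gt_eqF // (lt_le_trans ltr01 s1).
have p0 : 0 <= p by exact: le_trans (ltW bep).
apply: ler_pM.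
- by apply: mulr_ge0; [exact: powR_ge0| apply: mulr_ge0 => //; exact: powR_ge0].
- exact: powR_ge0.
- apply: ler_wpM2r; first by apply: mulr_ge0 => //; exact: powR_ge0.
  by apply: ler_powR => //; rewrite e1.
- apply: (@le_trans _ _ (v `^ p)); last exact: powR_max1.
  apply: ler_powR => //.
  rewrite e1 mulrA ler_pdivrMr // mulrC; apply: ler_wpM2l => //.
  by rewrite lerBrDr.
Qed.


Section Core.
Context (R : realType) (d1 d2 : measure_display)
  (X : measurableType d1) (Y : measurableType d2)
  (dX : X -> X -> R) (dY : Y -> Y -> R) (x0 : X) (y0 : Y)
  (mu : probability X R) (nu : probability Y R)
  (c : X * Y -> R) (c1 : X -> R) (c2 : Y -> R) (chat : X -> Y -> R)
  (p : R) (N : nat) (alpha beta Kp Km : 'I_N -> R) (ap am : X -> R).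
Context (pX : polish_metric_space dX) (pY : polish_metric_space dY)
  (mc : measurable_fun setT c) (p0 : 0 < p)
  (lam : R) (lam0 : 0 < lam)
  (hE : (\int[nu]_y (expR (lam * (dY y y0) `^ p))%:E < +oo)%E)
  (halpha : forall i, 0 <= alpha i <= p)
  (hbeta : forall i, 0 <= beta i < p)
  (hab : forall i, alpha i + beta i <= p)
  (hKp : forall i, 0 <= Kp i) (hKm : forall i, 0 <= Km i)
  (hap : forall x, 0 <= ap x) (ham : forall x, 0 <= am x)
  (map : measurable_fun setT ap) (mam : measurable_fun setT am)
  (iap : mu.-integrable setT (EFin \o ap))
  (ic1 : mu.-integrable setT (EFin \o c1)) (ic2 : nu.-integrable setT (EFin \o c2))
  (hc : forall x y, c (x, y) = c1 x + c2 y + chat x y)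
  (hlow : forall x y,
     - am x - \sum_(i < N) Km i * (dX x x0) `^ (alpha i) * (dY y y0) `^ (beta i) <= chat x y)
  (hup : forall x y,
     chat x y <= ap x + \sum_(i < N) Kp i * (dX x x0) `^ (alpha i) * (dY y y0) `^ (beta i))
  (hPx : (\int[mu]_x ((dX x x0) `^ p)%:E < +oo)%E)
  (M : R) (hM1 : forall x, `|c1 x| + ap x + am x <= M * (1 + (dX x x0) `^ p))
  (hM2 : forall y, `|c2 y| <= M * (1 + (dY y y0) `^ p)).

Let Px x := (dX x x0) `^ p.
Let Py y := (dY y y0) `^ p.

Lemma mPx : measurable_fun setT Px.
Proof. exact: measurableT_comp (measurable_powR p) (measurable_dist x0 pX). Qed.
Lemma mPy : measurable_fun setT Py.
Proof. exact: measurableT_comp (measurable_powR p) (measurable_dist y0 pY). Qed.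

Lemma dX_ge0 x : 0 <= dX x x0.
Proof. by case: pX => -[h0 _ _ _] _ _ _; exact: h0. Qed.
Lemma dY_ge0 y : 0 <= dY y y0.
Proof. by case: pY => -[h0 _ _ _] _ _ _; exact: h0. Qed.

Lemma Px_ge0 x : 0 <= Px x. Proof. exact: powR_ge0. Qed.
Lemma Py_ge0 y : 0 <= Py y. Proof. exact: powR_ge0. Qed.

Lemma iPx : mu.-integrable setT (EFin \o Px).
Proof.
apply/integrableP; split; first exact/measurable_EFinP/mPx.
rewrite (eq_integral (fun x => (Px x)%:E)) //.
by move=> x _; rewrite /comp abse_EFin ger0_norm // Px_ge0.
Qed.

Let ey y := expR (lam * Py y).

Lemma iey : nu.-integrable setT (EFin \o ey).
Proof.
have mey : measurable_fun setT ey.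
  apply: measurableT_comp => //; apply: measurableT_comp => //; exact: mPy.
apply/integrableP; split; first exact/measurable_EFinP.
rewrite (eq_integral (fun y => (ey y)%:E)) //.
by move=> y _; rewrite /comp abse_EFin ger0_norm // expR_ge0.
Qed.

Lemma iPy : nu.-integrable setT (EFin \o Py).
Proof.
apply: (le_integrable measurableT (g := EFin \o (fun y => lam^-1 * ey y))).
- exact/measurable_EFinP/mPy.
- move=> y _; rewrite /comp !abse_EFin lee_fin !ger0_norm ?Py_ge0 //; last first.
    by rewrite mulr_ge0 ?expR_ge0 // invr_ge0 ltW.
  rewrite ler_pdivlMl //; apply: le_trans (expR_ge1Dx _); lra.
- exact: iZ _ _ iey.
Qed.

Let S y := \sum_(i < N) Kp i * (dY y y0) `^ (beta i).
Let mf f := fine (\int[mu]_x negpart (f x)%:E)%E.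
Let Ic1 := Rintegral mu setT c1.
Let Iap := Rintegral mu setT ap.
Let IPx := Rintegral mu setT Px.

Lemma S_ge0 y : 0 <= S y.
Proof. by apply: sumr_ge0 => i _; rewrite mulr_ge0 ?powR_ge0. Qed.

Lemma c_up x y : c (x, y) <= c1 x + c2 y + ap x + S y * (1 + Px x).
Proof.
rewrite hc; have h1 := hup x y.
have h2 : \sum_(i < N) Kp i * (dX x x0) `^ (alpha i) * (dY y y0) `^ (beta i) <= S y * (1 + Px x).
  rewrite /S mulr_suml; apply: ler_sum => i _.
  rewrite mulrAC; apply: ler_wpM2l; first by rewrite mulr_ge0 ?powR_ge0.
  apply: powR_le1p; last exact: halpha.
  by case: pX => -[h0 _ _ _] _ _ _; exact: h0.
lra.
Qed.

Lemma mfunc (f : X -> R) : mu.-integrable setT (EFin \o f) -> measurable_fun setT f.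
Proof. by move=> h; exact/measurable_EFinP/(measurable_int mu). Qed.

Lemma mfunc_nu (f : Y -> R) : nu.-integrable setT (EFin \o f) -> measurable_fun setT f.
Proof. by move=> h; exact/measurable_EFinP/(measurable_int nu). Qed.

Lemma stepA (s : R) (c' : X * Y -> R) (f : X -> R) : 1 <= s -> (forall xy, c' xy = s * c xy) ->
  mu.-integrable setT (EFin \o f) -> forall y, cconj mu c' f y \is a fin_num ->
  fine (cconj mu c' f y) <= mf f + s * (c2 y + Ic1 + Iap + S y * (1 + IPx)).
Proof.
move=> s1 hc' iff y hfin.
have s0 : 0 <= s by exact: le_trans s1.
set h := fun x => c2 y + c1 x + ap x + S y * (1 + Px x).
have ih : mu.-integrable setT (EFin \o h).
  apply: iD; last by apply: iZ; apply: iD => //; [exact: int_cst|exact: iPx].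
  by apply: iD => //; apply: iD => //; exact: int_cst.
set g := fun x => f x - s * h x.
have ig : mu.-integrable setT (EFin \o g) by apply: iB => //; exact: iZ.
have Ig : Rintegral mu setT g = Rintegral mu setT f - s * (c2 y + Ic1 + Iap + S y * (1 + IPx)).
  rewrite /g (RintegralB (f1 := f) (f2 := (fun x => s * h x)%R)) //; last exact: iZ.
  rewrite (RintegralZl (f := h)) //; congr (_ - s * _).
  rewrite /h Rlin //; [exact: iPx].
have mcx : measurable_fun setT (fun x => c' (x, y)).
  rewrite (_ : (fun x => c' (x, y)) = (fun x => s * c (x, y))); last by apply/funext => x; rewrite hc'.
  by apply: measurableT_comp => //; exact: measurable_fun_pair1.
have mf0 := mfunc f iff.
have hJ := jensen_exp g ig.
have hle : (\int[mu]_x (expR (g x))%:E <= \int[mu]_x (expR (f x - c' (x, y)))%:E)%E.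
  apply: (@ge0_le_integral _ _ _ mu setT measurableT).
  - by move=> x _; rewrite lee_fin expR_ge0.
  - by apply/measurable_EFinP; apply: measurableT_comp => //; exact: mfunc g ig.
  - by apply/measurable_EFinP; apply: measurableT_comp => //; exact: measurable_funB.
  - move=> x _; rewrite lee_fin ler_expR /g hc' lerB // ler_wpM2l //.
    by have := c_up x y; rewrite /h; lra.
have hl : ((Rintegral mu setT g)%:E <= lne (\int[mu]_x (expR (f x - c' (x, y)))%:E))%E.
  rewrite -[X in (X%:E <= _)%E]expRK -lne_EFin ?expR_gt0 //.
  rewrite lee_lne ?in_itv /= ?leey ?andbT ?lee_fin ?expR_ge0 //.
    exact: le_trans hJ hle.
  by apply: integral_ge0 => x _; rewrite lee_fin expR_ge0.
have hcc : (cconj mu c' f y <= (- Rintegral mu setT g)%:E)%E.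
  by rewrite /cconj EFinN leeN2.
have hn := neg_bound f iff.
have hnf := neg_fin f iff.
move: hcc hn; rewrite -(fineK hfin) -(fineK hnf) !lee_fin Ig /mf.
lra.
Qed.

Let Bm := \big[Num.max/0]_(i < N) beta i.
Let mexp := Num.max (p / (p - Bm)) 1.
Let del := lam / N.+1%:R.
Let m1 := 1 + IPx.
Let L i := Kp i * m1 + Km i.
Let ee i := beta i / (p - beta i).
Let KY := \sum_(i < N) L i * (L i / del) `^ (ee i).
Let E := Rintegral nu setT ey.
Let CB := `|Ic1| + Iap + M + KY + E.

Lemma Bm_lt : Bm < p.
Proof. by apply: bigmax_lt => // i _; case/andP: (hbeta i). Qed.

Lemma mexp_ge1 : 1 <= mexp.
Proof. by rewrite le_max lexx orbT. Qed.

Lemma mexp_i i : p / (p - beta i) <= mexp.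
Proof.
apply: (@le_trans _ _ (p / (p - Bm))); last by rewrite le_max lexx.
have h1 : 0 < p - Bm by rewrite subr_gt0 Bm_lt.
have h2 : beta i <= Bm by exact: le_bigmax.
apply: ler_wpM2l; first exact: ltW.
rewrite lef_pV2 ?posrE //; first lra.
by rewrite subr_gt0; case/andP: (hbeta i).
Qed.

Lemma s_le_smexp s : 1 <= s -> s <= s `^ mexp.
Proof.
move=> s1; rewrite -{1}(powRr1 (le_trans ler01 s1)).
by apply: ler_powR => //; exact: mexp_ge1.
Qed.

Lemma IPx_ge0 : 0 <= IPx.
Proof. by apply: Rintegral_ge0 => x _; exact: Px_ge0. Qed.

Lemma M_ge0 : 0 <= M.
Proof.
have h := hM1 x0; have h0 : 0 <= `|c1 x0| + ap x0 + am x0 by rewrite !addr_ge0.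
have hp : 0 < 1 + dX x0 x0 `^ p by rewrite ltr_pwDl // powR_ge0.
by rewrite -(pmulr_lge0 _ hp); exact: le_trans h.
Qed.

Lemma E_ge1 : 1 <= E.
Proof.
rewrite -[1](Rint_cst (P := nu)); apply: le_Rintegral => //; [exact: int_cst|exact: iey|].
move=> y _; apply: le_trans (expR_ge1Dx _); rewrite lerDl mulr_ge0 ?Py_ge0 //; exact: ltW.
Qed.

Lemma del_gt0 : 0 < del.
Proof. by rewrite divr_gt0. Qed.

Lemma KY_ge0 : 0 <= KY.
Proof.
apply: sumr_ge0 => i _; rewrite mulr_ge0 ?powR_ge0 // /L addr_ge0 // mulr_ge0 //.
by rewrite /m1 addr_ge0 // IPx_ge0.
Qed.

Lemma stepB (s : R) (c' : X * Y -> R) (f : X -> R) : 1 <= s -> (forall xy, c' xy = s * c xy) ->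
  mu.-integrable setT (EFin \o f) -> (forall y, cconj mu c' f y \is a fin_num) ->
  nu.-integrable setT (cconj mu c' f) -> forall x,
  (lne (\int[nu]_y expeR (cconj mu c' f y - (c' (x, y))%:E)) <=
    (mf f + CB * s `^ mexp * (1 + Px x))%:E)%E.
Proof.
move=> s1 hc' iff hfin icc x.
have s0 : 0 <= s by exact: le_trans s1.
set fc := fun y => fine (cconj mu c' f y).
have efc : EFin \o fc = cconj mu c' f by apply/funext => y; rewrite /comp /fc fineK.
have mfc : measurable_fun setT fc.
  by apply/measurable_EFinP; rewrite efc; exact: (measurable_int nu).
have eqG : (\int[nu]_y expeR (cconj mu c' f y - (c' (x, y))%:E) =
            \int[nu]_y (expR (fc y - c' (x, y)))%:E)%E.
  by apply: eq_integral => y _; rewrite -[cconj mu c' f y](fineK (hfin y)).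
rewrite eqG.
pose w i := s * (Kp i * m1 + Km i * (dX x x0) `^ (alpha i)).
have w0 i : 0 <= w i.
  rewrite mulr_ge0 // addr_ge0 // mulr_ge0 ?powR_ge0 //.
  by rewrite /m1 addr_ge0 // IPx_ge0.
set A := s * (Ic1 + Iap - c1 x + am x) + \sum_(i < N) w i * (w i / del) `^ (ee i).
have hpt y : fc y - c' (x, y) <= mf f + A + lam * Py y.
  have hA := stepA s c' f s1 hc' iff y (hfin y).
  have hl := hlow x y.
  have hl' : s * (- am x - \sum_(i < N) Km i * (dX x x0) `^ (alpha i) * (dY y y0) `^ (beta i))
     <= s * chat x y by apply: ler_wpM2l.
  have hsum : s * (S y * m1 + \sum_(i < N) Km i * (dX x x0) `^ (alpha i) * (dY y y0) `^ (beta i))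
      = \sum_(i < N) w i * (dY y y0) `^ (beta i).
    rewrite /S mulr_suml -big_split mulr_sumr; apply: eq_bigr => i _ /=; rewrite /w; ring.
  have hy : \sum_(i < N) w i * (dY y y0) `^ (beta i) <= lam * Py y + \sum_(i < N) w i * (w i / del) `^ (ee i).
    apply: (@le_trans _ _ (\sum_(i < N) (del * Py y + w i * (w i / del) `^ (ee i)))).
      apply: ler_sum => i _; apply: young_like => //; [exact: dY_ge0|exact: del_gt0].
    rewrite big_split /= sumr_const card_ord lerD2r.
    rewrite -mulr_natr mulrAC /del -mulrA mulrA; apply: ler_wpM2r; first exact: Py_ge0.
    rewrite mulrAC ler_pdivrMr //; apply: ler_wpM2l; first exact: ltW.
    by rewrite ler_nat.
  rewrite hc' hc /A /fc.
  have e1 : s * (c1 x + c2 y + chat x y) = s * c1 x + s * c2 y + s * chat x y by ring.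
  rewrite e1.
  have e2 : s * (c2 y + Ic1 + Iap + S y * (1 + IPx)) = s * c2 y + s * Ic1 + s * Iap + s * (S y * m1) by rewrite /m1; ring.
  rewrite e2 in hA.
  have e3 : s * (- am x - \sum_(i < N) Km i * dX x x0 `^ alpha i * dY y y0 `^ beta i)
     = - s * am x - s * \sum_(i < N) Km i * dX x x0 `^ alpha i * dY y y0 `^ beta i by ring.
  rewrite e3 in hl'.
  have e4 : s * (S y * m1 + \sum_(i < N) Km i * dX x x0 `^ alpha i * dY y y0 `^ beta i)
     = s * (S y * m1) + s * \sum_(i < N) Km i * dX x x0 `^ alpha i * dY y y0 `^ beta i by ring.
  rewrite e4 in hsum.
  have e5 : s * (Ic1 + Iap - c1 x + am x) = s * Ic1 + s * Iap - s * c1 x + s * am x by ring.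
  rewrite e5.
  lra.
have mcy : measurable_fun setT (fun y => c' (x, y)).
  rewrite (_ : (fun y => c' (x, y)) = (fun y => s * c (x, y))); last by apply/funext => y; rewrite hc'.
  by apply: measurableT_comp => //; exact: measurable_fun_pair2.
set k := expR (mf f + A).
have ik : nu.-integrable setT (EFin \o (fun y => k * ey y)) by exact: iZ _ _ iey.
have hint : (\int[nu]_y (expR (fc y - c' (x, y)))%:E <= \int[nu]_y (k * ey y)%:E)%E.
  apply: (@ge0_le_integral _ _ _ nu setT measurableT).
  - by move=> y _; rewrite lee_fin expR_ge0.
  - by apply/measurable_EFinP; apply: measurableT_comp => //; exact: measurable_funB.
  - exact: (measurable_int nu ik).
  - move=> y _; rewrite lee_fin /k /ey -expRD ler_expR; exact: hpt.
have hI : (\int[nu]_y (k * ey y)%:E = (k * E)%:E)%E.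
  by rewrite (int_fin (fun y => k * ey y) ik) RintegralZl //; exact: iey.
have E0 : 0 < E by exact: lt_le_trans ltr01 E_ge1.
have k0 : 0 < k by exact: expR_gt0.
have hl : (lne (\int[nu]_y (expR (fc y - c' (x, y)))%:E) <= (mf f + A + ln E)%:E)%E.
  apply: (@le_trans _ _ (lne (k * E)%:E)).
    rewrite -hI lee_lne ?in_itv /= ?leey ?andbT //.
      by apply: integral_ge0 => y _; rewrite lee_fin expR_ge0.
    by rewrite hI lee_fin mulr_ge0 // ltW.
  by rewrite lne_EFin ?mulr_gt0 // lnM ?posrE // /k expRK.
apply: le_trans hl _; rewrite lee_fin.
have hlnE : ln E <= E by exact/ltW/ln_sublinear.
have Px0 := Px_ge0 x.
have sm1 : 1 <= s `^ mexp by apply: le_trans s1 (s_le_smexp s s1).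
have hA2 : \sum_(i < N) w i * (w i / del) `^ (ee i) <= s `^ mexp * KY * (1 + Px x).
  rewrite /KY mulr_sumr mulr_suml; apply: ler_sum => i _.
  apply: young_chain => //; [exact: dX_ge0|by rewrite /m1 addr_ge0 // IPx_ge0|
    by case/andP: (halpha i)|exact: del_gt0|exact: mexp_i].
have hA1 : s * (Ic1 + Iap - c1 x + am x) <= s `^ mexp * (`|Ic1| + Iap + M) * (1 + Px x).
  have h1 := hM1 x.
  have h2 : - c1 x <= `|c1 x| by rewrite ler_normr lexx orbT.
  have h3 : Ic1 <= `|Ic1| by exact: ler_norm.
  have h4 : 0 <= Iap by apply: Rintegral_ge0 => z _; exact: hap.
  have h5 : 0 <= (`|Ic1| + Iap) * Px x by rewrite mulr_ge0 // addr_ge0.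
  have h6 : Ic1 + Iap - c1 x + am x <= (`|Ic1| + Iap + M) * (1 + Px x).
    have := hap x; rewrite /Px in h5 *; lra.
  have h7 : 0 <= (`|Ic1| + Iap + M) * (1 + Px x) by rewrite mulr_ge0 ?addr_ge0 // M_ge0.
  apply: (@le_trans _ _ (s * ((`|Ic1| + Iap + M) * (1 + Px x)))).
    by apply: ler_wpM2l.
  rewrite -(mulrA (s `^ mexp)); apply: ler_wpM2r => //; exact: s_le_smexp.
have hE' : E <= s `^ mexp * E * (1 + Px x).
  have -> : s `^ mexp * E * (1 + Px x) = E * (s `^ mexp * (1 + Px x)) by ring.
  apply: ler_peMr; first exact: ltW.
  by apply: mulr_ege1 => //; rewrite lerDl.
have eCB : CB * s `^ mexp * (1 + Px x) = s `^ mexp * (`|Ic1| + Iap + M) * (1 + Px x)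
   + s `^ mexp * KY * (1 + Px x) + s `^ mexp * E * (1 + Px x) by rewrite /CB; ring.
rewrite eCB /A; lra.
Qed.

Let Ksum := \sum_(i < N) Kp i.
Let Ic2 := Rintegral nu setT c2.
Let IPy := Rintegral nu setT Py.
Let mfc (g : Y -> \bar R) := fine (\int[nu]_y negpart (g y))%E.
Let CC := M + `|Ic2| + Ksum * (1 + IPy).

Lemma c_up2 x y : c (x, y) <= c1 x + c2 y + ap x + Ksum * (1 + Px x) * (1 + Py y).
Proof.
rewrite hc; have h1 := hup x y.
have h2 : \sum_(i < N) Kp i * (dX x x0) `^ (alpha i) * (dY y y0) `^ (beta i) <=
          Ksum * (1 + Px x) * (1 + Py y).
  rewrite /Ksum !mulr_suml; apply: ler_sum => i _.
  apply: ler_pM; rewrite ?mulr_ge0 ?powR_ge0 //.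
  - apply: ler_wpM2l => //; apply: powR_le1p; [exact: dX_ge0|exact: halpha].
  - apply: powR_le1p; first exact: dY_ge0.
    by case/andP: (hbeta i) => -> /ltW ->.
lra.
Qed.

Lemma IPy_ge0 : 0 <= IPy.
Proof. by apply: Rintegral_ge0 => y _; exact: Py_ge0. Qed.

Lemma Ksum_ge0 : 0 <= Ksum.
Proof. by apply: sumr_ge0 => i _. Qed.

Lemma stepC (s : R) (c' : X * Y -> R) (f : X -> R) : 1 <= s -> (forall xy, c' xy = s * c xy) ->
  (forall y, cconj mu c' f y \is a fin_num) ->
  nu.-integrable setT (cconj mu c' f) -> forall x,
  (- lne (\int[nu]_y expeR (cconj mu c' f y - (c' (x, y))%:E)) <=
    (mfc (cconj mu c' f) + CC * s `^ mexp * (1 + Px x))%:E)%E.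
Proof.
move=> s1 hc' hfin icc x.
have s0 : 0 <= s by exact: le_trans s1.
set fc := fun y => fine (cconj mu c' f y).
have efc : EFin \o fc = cconj mu c' f by apply/funext => y; rewrite /comp /fc fineK.
have ifc : nu.-integrable setT (EFin \o fc) by rewrite efc.
have mfc0 : measurable_fun setT fc.
  by apply/measurable_EFinP; rewrite efc; exact: (measurable_int nu).
have eqG : (\int[nu]_y expeR (cconj mu c' f y - (c' (x, y))%:E) =
            \int[nu]_y (expR (fc y - c' (x, y)))%:E)%E.
  by apply: eq_integral => y _; rewrite -[cconj mu c' f y](fineK (hfin y)).
rewrite eqG.
set h := fun y => (c1 x + ap x) + c2 y + (fun _ => 0) y + Ksum * (1 + Px x) * (1 + Py y).
have ih : nu.-integrable setT (EFin \o h).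
  apply: iD; last by apply: iZ; apply: iD; [exact: int_cst|exact: iPy].
  by apply: iD; [apply: iD => //; exact: int_cst|exact: int_cst].
set g := fun y => fc y - s * h y.
have ig : nu.-integrable setT (EFin \o g) by apply: iB => //; exact: iZ.
have Ig : Rintegral nu setT g = Rintegral nu setT fc - s * ((c1 x + ap x) + Ic2 + 0 + Ksum * (1 + Px x) * (1 + IPy)).
  rewrite /g (RintegralB (f1 := fc) (f2 := (fun y => s * h y)%R)) //; last exact: iZ.
  rewrite (RintegralZl (f := h)) //; congr (_ - s * _).
  rewrite /h Rlin //; [by rewrite Rint_cst|exact: int_cst|exact: iPy].
have mcy : measurable_fun setT (fun y => c' (x, y)).
  rewrite (_ : (fun y => c' (x, y)) = (fun y => s * c (x, y))); last by apply/funext => y; rewrite hc'.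
  by apply: measurableT_comp => //; exact: measurable_fun_pair2.
have hJ := jensen_exp g ig.
have hle : (\int[nu]_y (expR (g y))%:E <= \int[nu]_y (expR (fc y - c' (x, y)))%:E)%E.
  apply: (@ge0_le_integral _ _ _ nu setT measurableT).
  - by move=> y _; rewrite lee_fin expR_ge0.
  - by apply/measurable_EFinP; apply: measurableT_comp => //; exact: mfunc_nu g ig.
  - by apply/measurable_EFinP; apply: measurableT_comp => //; exact: measurable_funB.
  - move=> y _; rewrite lee_fin ler_expR /g hc' lerB // ler_wpM2l //.
    by have := c_up2 x y; rewrite /h; lra.
have hl : ((Rintegral nu setT g)%:E <= lne (\int[nu]_y (expR (fc y - c' (x, y)))%:E))%E.
  rewrite -[X in (X%:E <= _)%E]expRK -lne_EFin ?expR_gt0 //.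
  rewrite lee_lne ?in_itv /= ?leey ?andbT ?lee_fin ?expR_ge0 //.
    exact: le_trans hJ hle.
  by apply: integral_ge0 => y _; rewrite lee_fin expR_ge0.
have hn := neg_bound fc ifc.
have hnf := neg_fin fc ifc.
have enf : (\int[nu]_y negpart (fc y)%:E = \int[nu]_y negpart (cconj mu c' f y))%E.
  by apply: eq_integral => y _; rewrite /fc fineK.
rewrite enf in hn hnf.
apply: (@le_trans _ _ (- (Rintegral nu setT g)%:E)%E); first by rewrite leeN2.
rewrite -EFinN Ig /mfc lee_fin.
move: hn; rewrite -(fineK hnf) lee_fin => hn.
have Px0 := Px_ge0 x.
have hM := hM1 x.
have h2 : Ic2 <= `|Ic2| by exact: ler_norm.
have h3 : 0 <= `|Ic2| * Px x by rewrite mulr_ge0.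
have h4 := ham x.
have h5 : c1 x <= `|c1 x| by exact: ler_norm.
have h6 : (c1 x + ap x) + Ic2 + 0 + Ksum * (1 + Px x) * (1 + IPy) <= CC * (1 + Px x).
  rewrite /CC; rewrite /Px in h3 hM *; nra.
have h7 : 0 <= CC * (1 + Px x).
  by rewrite mulr_ge0 // /CC !addr_ge0 ?M_ge0 // mulr_ge0 ?Ksum_ge0 // addr_ge0 // IPy_ge0.
have h8 : s * ((c1 x + ap x) + Ic2 + 0 + Ksum * (1 + Px x) * (1 + IPy)) <= s `^ mexp * (CC * (1 + Px x)).
  apply: (@le_trans _ _ (s * (CC * (1 + Px x)))); first by apply: ler_wpM2l.
  by apply: ler_wpM2r => //; exact: s_le_smexp.
have e : CC * s `^ mexp * (1 + Px x) = s `^ mexp * (CC * (1 + Px x)) by ring.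
rewrite e; lra.
Qed.

Lemma CB_ge0 : 0 <= CB.
Proof.
rewrite /CB !addr_ge0 ?M_ge0 ?KY_ge0 //; last exact: le_trans ler01 E_ge1.
by apply: Rintegral_ge0 => z _; exact: hap.
Qed.

Lemma CC_ge0 : 0 <= CC.
Proof. by rewrite /CC !addr_ge0 ?M_ge0 // mulr_ge0 ?Ksum_ge0 // addr_ge0 // IPy_ge0. Qed.

Lemma core : exists K0 : R, forall (s : R) (c' : X * Y -> R), 1 <= s -> (forall xy, c' xy = s * c xy) ->
  forall f : X -> R, mu.-integrable setT (EFin \o f) ->
  (forall y, cconj mu c' f y \is a fin_num) ->
  nu.-integrable setT (cconj mu c' f) -> forall x,
  (`| cconj2 nu c' (cconj mu c' f) x | <=
    \int[mu]_x' negpart (f x')%:E + \int[nu]_y negpart (cconj mu c' f y)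
    + (K0 * s `^ mexp * (1 + (dX x x0) `^ p))%:E)%E.
Proof.
exists (CB + CC) => s c' s1 hc' f iff hfin icc x.
have hB := stepB s c' f s1 hc' iff hfin icc x.
have hC := stepC s c' f s1 hc' hfin icc x.
rewrite /cconj2.
set G := (\int[nu]_y expeR (cconj mu c' f y - (c' (x, y))%:E))%E in hB hC *.
have hnf := neg_fin f iff.
have hncf : (\int[nu]_y negpart (cconj mu c' f y))%E \is a fin_num.
  have := integrable_fin_num measurableT (integrable_funeneg measurableT icc).
  by rewrite (eq_integral (fun y => negpart (cconj mu c' f y))) // => y _; rewrite funenegE.
have mf0 : 0 <= mf f by rewrite /mf fine_ge0 // neg_ge0.
have mfc0 : 0 <= mfc (cconj mu c' f) by rewrite /mfc fine_ge0 // neg_ge0.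
have t0 : 0 <= s `^ mexp * (1 + Px x) by rewrite mulr_ge0 ?powR_ge0 // addr_ge0 // Px_ge0.
have CB0 := CB_ge0; have CC0 := CC_ge0.
have ht1 : 0 <= CB * s `^ mexp * (1 + Px x) by rewrite -mulrA mulr_ge0.
have ht2 : 0 <= CC * s `^ mexp * (1 + Px x) by rewrite -mulrA mulr_ge0.
rewrite -(fineK hnf) -(fineK hncf) -!EFinD.
have e : (CB + CC) * s `^ mexp * (1 + dX x x0 `^ p) = CB * s `^ mexp * (1 + Px x) + CC * s `^ mexp * (1 + Px x).
  by rewrite /Px; ring.
rewrite e.
move: hB hC mf0 mfc0; rewrite /mf /mfc => hB hC mf0 mfc0; move: hB hC.
case: (lne G) => [r| |] /=.
- rewrite !lee_fin => hB hC; rewrite ler_norml; apply/andP; split; lra.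
- by move=> hB _; move: hB; rewrite leNgt ltry.
- by move=> _ hC; move: hC; rewrite leNgt ltry.
Qed.

End Core.

Theorem theorem5p7 (R : realType) (d1 d2 : measure_display)
  (X : measurableType d1) (Y : measurableType d2)
  (dX : X -> X -> R) (dY : Y -> Y -> R) (x0 : X) (y0 : Y)
  (mu : probability X R) (nu : probability Y R)
  (c : X * Y -> R) (c1 : X -> R) (c2 : Y -> R) (chat : X -> Y -> R)
  (p : R) (N : nat) (alpha beta Kp Km : 'I_N -> R) (ap am : X -> R) :
  polish_metric_space dX -> polish_metric_space dY ->
  measurable_fun setT c ->
  (* growth hypotheses *)
  0 < p ->
  (exists2 lam : R, 0 < lam &
     (\int[nu]_y (expR (lam * (dY y y0) `^ p))%:E < +oo)%E) ->
  (forall i, 0 <= alpha i <= p) ->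
  (forall i, 0 <= beta i < p) ->
  (forall i, alpha i + beta i <= p) ->
  (forall i, 0 <= Kp i) -> (forall i, 0 <= Km i) ->
  (forall x, 0 <= ap x) -> (forall x, 0 <= am x) ->
  measurable_fun setT ap -> measurable_fun setT am ->
  mu.-integrable setT (EFin \o ap) ->
  mu.-integrable setT (EFin \o c1) -> nu.-integrable setT (EFin \o c2) ->
  (forall x y, c (x, y) = c1 x + c2 y + chat x y) ->
  (forall x y,
     - am x - \sum_(i < N) Km i * (dX x x0) `^ (alpha i) * (dY y y0) `^ (beta i)
       <= chat x y) ->
  (forall x y,
     chat x y <= ap x + \sum_(i < N) Kp i * (dX x x0) `^ (alpha i) * (dY y y0) `^ (beta i)) ->
  (* additional hypotheses of the theorem *)
  (\int[mu]_x ((dX x x0) `^ p)%:E < +oo)%E ->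
  (exists M : R, (forall x, `|c1 x| + ap x + am x <= M * (1 + (dX x x0) `^ p)) /\
                 (forall y, `|c2 y| <= M * (1 + (dY y y0) `^ p))) ->
  exists K : R,
    (forall f : X -> R,
       mu.-integrable setT (EFin \o f) ->
       (forall y, cconj mu c f y \is a fin_num) ->
       nu.-integrable setT (cconj mu c f) ->
       forall x,
         (`| cconj2 nu c (cconj mu c f) x |
           <= \int[mu]_x' negpart (f x')%:E + \int[nu]_y negpart (cconj mu c f y)
              + (K * (1 + (dX x x0) `^ p))%:E)%E)
    /\
    (forall eps : R, 0 < eps < 1 ->
       let ceps := fun xy : X * Y => c xy / eps in
       let a := p - \big[Num.max/0]_(i < N) beta i in
       let Kt := eps `^ (- Num.max (p / a) 1) * K in
       forall f : X -> R,
       mu.-integrable setT (EFin \o f) ->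
       (forall y, cconj mu ceps f y \is a fin_num) ->
       nu.-integrable setT (cconj mu ceps f) ->
       forall x,
         (`| cconj2 nu ceps (cconj mu ceps f) x |
           <= \int[mu]_x' negpart (f x')%:E + \int[nu]_y negpart (cconj mu ceps f y)
              + (Kt * (1 + (dX x x0) `^ p))%:E)%E).
Proof.
move=> pX pY mc p0 [lam lam0 hE] halpha hbeta hab hKp hKm hap ham map mam iap ic1 ic2
  hc hlow hup hPx [M [hM1 hM2]].
have [K0 hK] := @core R d1 d2 X Y dX dY x0 y0 mu nu c c1 c2 chat p N alpha beta Kp Km ap am
  pX pY mc p0 lam lam0 hE halpha hbeta hab hKp hKm hap ham iap ic1 ic2
  hc hlow hup hPx M hM1.
exists K0; split.
- move=> f iff hfin icc x.
  have := hK 1 c (lexx 1) (fun xy => esym (mul1r (c xy))) f iff hfin icc x.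
  by rewrite powR1 mulr1.
- move=> eps /andP[e0 e1] ceps a Kt f iff hfin icc x.
  have s1 : 1 <= eps^-1 by rewrite invf_ge1 // ltW.
  have hc' : forall xy, ceps xy = eps^-1 * c xy by move=> xy; rewrite /ceps mulrC.
  have := hK eps^-1 ceps s1 hc' f iff hfin icc x.
  suff -> : Kt = K0 * eps^-1 `^ Num.max (p / (p - \big[Num.max/0]_(i < N) beta i)) 1 by [].
  rewrite /Kt /a mulrC; congr (_ * _).
  rewrite powRN; set m := Num.max _ _.
  have ep : 0 < eps `^ m by exact: powR_gt0.
  apply: (mulfI (lt0r_neq0 ep)); rewrite mulfV ?lt0r_neq0 //.
  by rewrite -powRM ?invr_ge0 ?ltW // mulfV ?lt0r_neq0 // powR1.
Qed.
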